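(* Let $A\subseteq B\subseteq C$ be extensions of commutative rings. Then there is an exact sequence of abelian groups $$0\longrightarrow \mathfrak{C}(A,B)\longrightarrow \mathfrak{C}(A,C)\longrightarrow \mathfrak{C}(B,C),$$ where the first map is induced by the inclusion $\mathscr{G}(A,B)\subseteq \mathscr{G}(A,C)$ and the second map is induced by $L\mapsto LB$.
   Context: All rings are commutative with identity. For an extension of rings $R\subseteq S$ and $R$-submodules $L,L'$ of $S$, $LL'$ denotes the $R$-submodule of $S$ of all finite sums $\sum x_ky_k$ with $x_k\in L$, $y_k\in L'$. An $R$-submodule $L$ of $S$ is an invertible ideal of the extension $R\subseteq S$ if $LL'=R$ for some $R$-submodule $L'$ of $S$. These form an abelian group $\mathscr{G}(R,S)$ under multiplication with identity $R$, and $\mathfrak{C}(R,S)=\mathscr{G}(R,S)/\{Rx: x\in S^\ast\}$ is the ideal class group of the extension ($S^\ast$ the unit group of $S$). *)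

(* Defs.v *)
From mathcomp Require Import all_boot all_algebra.
Set Implicit Arguments. Unset Strict Implicit. Unset Printing Implicit Defensive.
Import GRing.Theory.
Local Open Scope ring_scope.

Section Defs.
Variable C : comPzRingType.

Definition subring (A : C -> Prop) : Prop :=
  A 1 /\ (forall x y, A x -> A y -> A (x - y)) /\ (forall x y, A x -> A y -> A (x * y)).

Definition incl (L M : C -> Prop) : Prop := forall x, L x -> M x.

Definition submod (A L : C -> Prop) : Prop :=
  L 0 /\ (forall x y, L x -> L y -> L (x + y)) /\ (forall a x, A a -> L x -> L (a * x)).

Definition setmul (L M : C -> Prop) : C -> Prop :=
  fun z => exists s : seq (C * C),
    (forall p, p \in s -> L p.1 /\ M p.2) /\ z = \sum_(p <- s) p.1 * p.2.

Definition invertible (A S L : C -> Prop) : Prop :=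
  submod A L /\ incl L S /\
  exists L', submod A L' /\ incl L' S /\ setmul L L' = A.

Definition sunit (S : C -> Prop) (x : C) : Prop :=
  S x /\ exists y, S y /\ x * y = 1.

Definition principal (A : C -> Prop) (x : C) : C -> Prop :=
  fun z => exists a, A a /\ z = a * x.

Definition fullset : C -> Prop := fun _ => True.
End Defs.

(* Main.v *)
Require Import Defs.
From mathcomp Require Import all_boot all_algebra.
From Stdlib Require Import FunctionalExtensionality PropExtensionality.
Import GRing.Theory.
Local Open Scope ring_scope.

Section Aux.
Variable C : comPzRingType.
Implicit Types L M N A B : C -> Prop.

Lemma pred_ext (P Q : C -> Prop) : (forall x, P x <-> Q x) -> P = Q.
Proof.
move=> h; apply: functional_extensionality => x.
by apply: propositional_extensionality.
Qed.

Lemma setmul_ind L M N : N 0 -> (forall u v, N u -> N v -> N (u + v)) ->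
  (forall x y, L x -> M y -> N (x * y)) -> forall u, setmul L M u -> N u.
Proof.
move=> N0 ND NM u [s [Hs ->]].
elim: s Hs => [|p s IH] Hs; first by rewrite big_nil.
rewrite big_cons; apply: ND.
  by have [h1 h2] := Hs p (mem_head _ _); apply: NM.
by apply: IH => q hq; apply: Hs; rewrite in_cons hq orbT.
Qed.

Lemma setmul_gen L M x y : L x -> M y -> setmul L M (x * y).
Proof.
move=> hx hy; exists [:: (x, y)]; split; last by rewrite big_seq1.
by move=> p; rewrite inE => /eqP ->.
Qed.

Lemma setmul0 L M : setmul L M 0.
Proof. by exists [::]; split => //; rewrite big_nil. Qed.

Lemma setmulD L M u v : setmul L M u -> setmul L M v -> setmul L M (u + v).
Proof.
move=> [s [Hs ->]] [t [Ht ->]]; exists (s ++ t); split; last by rewrite big_cat.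
by move=> p; rewrite mem_cat => /orP [] h; [apply: Hs | apply: Ht].
Qed.

Lemma setmul_mul2 L1 M1 L2 M2 N : N 0 -> (forall u v, N u -> N v -> N (u + v)) ->
  (forall x y x' y', L1 x -> M1 y -> L2 x' -> M2 y' -> N ((x * y) * (x' * y'))) ->
  forall u v, setmul L1 M1 u -> setmul L2 M2 v -> N (u * v).
Proof.
move=> N0 ND NM u v Hu Hv.
move: u Hu; apply: (@setmul_ind L1 M1 (fun u => N (u * v))).
- by rewrite mul0r.
- by move=> u1 u2 h1 h2; rewrite mulrDl; auto.
move=> x y Lx My.
move: v Hv; apply: (@setmul_ind L2 M2 (fun v => N ((x * y) * v))).
- by rewrite mulr0.
- by move=> u1 u2 h1 h2; rewrite mulrDr; auto.
by move=> x' y' hx hy; apply: NM.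
Qed.

Lemma sr0 A : subring A -> A 0.
Proof. by move=> [h1 [h2 _]]; rewrite -(subrr 1); apply: h2. Qed.

Lemma srN A x : subring A -> A x -> A (- x).
Proof. move=> hA hx; rewrite -sub0r; case: (hA) => [_ [h _]]; apply: h => //; exact: sr0. Qed.

Lemma srD A x y : subring A -> A x -> A y -> A (x + y).
Proof.
move=> hA hx hy; rewrite -(opprK y); case: (hA) => [_ [h _]]; apply: h => //.
exact: srN.
Qed.

Lemma srM A x y : subring A -> A x -> A y -> A (x * y).
Proof. by move=> [_ [_ h]]; apply: h. Qed.

Lemma sr1 A : subring A -> A 1.
Proof. by case. Qed.

Lemma submod_setmulB B L : subring B -> submod B (setmul L B).
Proof.
move=> hB; split; first exact: setmul0.
split; first by move=> x y; apply: setmulD.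
move=> b x hb; move: x; apply: (@setmul_ind L B (fun x => setmul L B (b * x))).
- by rewrite mulr0; apply: setmul0.
- by move=> u v hu hv; rewrite mulrDr; apply: setmulD.
by move=> l c hl hc; rewrite mulrCA; apply: setmul_gen => //; apply: srM.
Qed.


Lemma princ0 B x : subring B -> principal B x 0.
Proof. by move=> hB; exists 0; split; [exact: sr0 | rewrite mul0r]. Qed.

Lemma princD B x u v : subring B -> principal B x u -> principal B x v ->
  principal B x (u + v).
Proof.
move=> hB [a [ha ->]] [b [hb ->]]; exists (a + b); split; first exact: srD.
by rewrite mulrDl.
Qed.

Lemma part3 A B L : subring A -> subring B -> incl A B ->
  invertible A (@fullset C) L -> invertible B (@fullset C) (setmul L B).
Proof.
move=> hA hB hAB [hL [_ [L' [hL' [_ e]]]]].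
split; first exact: submod_setmulB.
split; first by [].
exists (setmul L' B); split; first exact: submod_setmulB.
split; first by [].
apply: pred_ext => u; split.
  move: u; apply: (@setmul_ind (setmul L B) (setmul L' B) B).
  - exact: sr0.
  - by move=> ??; apply: srD.
  move=> p q hp hq; move: hp hq; apply: (@setmul_mul2 L B L' B B).
  - exact: sr0.
  - by move=> ??; apply: srD.
  move=> l b l' b' hl hb hl' hb'.
  have -> : l * b * (l' * b') = (l * l') * (b * b').
    by rewrite mulrACA.
  apply: srM => //; last exact: srM.
  by apply: hAB; rewrite -e; apply: setmul_gen.
move=> hu.
have h1 : setmul L L' 1 by rewrite e; exact: sr1.
rewrite -(mul1r u); move: h1.
apply: (@setmul_ind L L' (fun w => setmul (setmul L B) (setmul L' B) (w * u))).
- by rewrite mul0r; apply: setmul0.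
- by move=> ????; rewrite mulrDl; apply: setmulD.
move=> l l' hl hl'.
have -> : l * l' * u = (l * 1) * (l' * u) by rewrite mulr1 mulrA.
by apply: setmul_gen; apply: setmul_gen => //; exact: sr1.
Qed.

Lemma part4 B L M : subring B ->
  setmul (setmul L M) B = setmul (setmul L B) (setmul M B).
Proof.
move=> hB; apply: pred_ext => u; split.
  move: u; apply: (@setmul_ind (setmul L M) B).
  - exact: setmul0.
  - by move=> ??; apply: setmulD.
  move=> w b hw hb; move: w hw.
  apply: (@setmul_ind L M (fun w => setmul (setmul L B) (setmul M B) (w * b))).
  - by rewrite mul0r; apply: setmul0.
  - by move=> ????; rewrite mulrDl; apply: setmulD.
  move=> l m hl hm.
  have -> : l * m * b = (l * 1) * (m * b) by rewrite mulr1 mulrA.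
  by apply: setmul_gen; apply: setmul_gen => //; exact: sr1.
move=> [s [Hs ->]].
elim: s Hs => [|p s IH] Hs; first by rewrite big_nil; apply: setmul0.
rewrite big_cons; apply: setmulD; last first.
  by apply: IH => q hq; apply: Hs; rewrite in_cons hq orbT.
have [h1 h2] := Hs p (mem_head _ _).
move: h1 h2; apply: (@setmul_mul2 L B M B).
- exact: setmul0.
- by move=> ??; apply: setmulD.
move=> l b m b' hl hb hm hb'.
have -> : l * b * (m * b') = (l * m) * (b * b') by rewrite mulrACA.
by apply: setmul_gen; [apply: setmul_gen | apply: srM].
Qed.

Lemma part5 A B x : subring A -> subring B -> incl A B ->
  setmul (principal A x) B = principal B x.
Proof.
move=> hA hB hAB; apply: pred_ext => u; split.
  move: u; apply: (@setmul_ind (principal A x) B).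
  - exact: princ0.
  - by move=> ??; apply: princD.
  move=> w b [a [ha ->]] hb; exists (a * b); split; last by rewrite mulrAC.
  by apply: srM => //; apply: hAB.
move=> [b [hb ->]].
have -> : b * x = (1 * x) * b by rewrite mul1r mulrC.
apply: setmul_gen => //; exists 1; split => //; exact: sr1.
Qed.

Lemma part6 A B L : subring A -> subring B -> incl A B -> invertible A B L ->
  forall x, sunit (@fullset C) x -> L = principal A x ->
  exists y, sunit B y /\ L = principal A y.
Proof.
move=> hA hB hAB [hL [hLB [L' [hL' [hL'B e]]]]] x hx eL.
exists x; split => //; split.
  apply: hLB; rewrite eL; exists 1; split; [exact: sr1 | by rewrite mul1r].
have h1 : setmul L L' 1 by rewrite e; exact: sr1.
move: h1; rewrite eL.
have : forall u, setmul (principal A x) L' u -> exists w, B w /\ u = x * w.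
  apply: setmul_ind.
  - by exists 0; split; [exact: sr0 | rewrite mulr0].
  - move=> u v [w [hw ->]] [w' [hw' ->]]; exists (w + w'); split.
      exact: srD.
    by rewrite mulrDr.
  move=> y l' [a [ha ->]] hl'; exists (a * l'); split.
    by apply: srM => //; [apply: hAB | apply: hL'B].
  by rewrite mulrCA mulrA.
move=> H /H [w [hw e1]]; exists w; split => //.
Qed.

Lemma part7 A B L : subring A -> subring B -> incl A B -> invertible A B L ->
  exists x, sunit (@fullset C) x /\ setmul L B = principal B x.
Proof.
move=> hA hB hAB [hL [hLB [L' [hL' [hL'B e]]]]].
exists 1; split; first by split => //; exists 1; rewrite mulr1.
apply: pred_ext => u; split.
  move: u; apply: (@setmul_ind L B).
  - exact: princ0.
  - by move=> ??; apply: princD.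
  move=> l b hl hb; exists (l * b); split; last by rewrite mulr1.
  by apply: srM => //; apply: hLB.
move=> [b [hb ->]]; rewrite mulr1.
have h1 : setmul L L' 1 by rewrite e; exact: sr1.
rewrite -(mul1r b); move: h1.
apply: (@setmul_ind L L' (fun w => setmul L B (w * b))).
- by rewrite mul0r; apply: setmul0.
- by move=> ????; rewrite mulrDl; apply: setmulD.
move=> l l' hl hl'; rewrite -mulrA; apply: setmul_gen => //.
by apply: srM => //; apply: hL'B.
Qed.


Lemma part8 A B L : subring A -> subring B -> incl A B ->
  invertible A (@fullset C) L ->
  forall x, sunit (@fullset C) x -> setmul L B = principal B x ->
  exists M y, invertible A B M /\ sunit (@fullset C) y /\
              L = setmul M (principal A y).
Proof.
move=> hA hB hAB [[L0 [LD LM]] [_ [L' [[L'0 [L'D L'M]] [_ e]]]]] x hx eLB.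
have [_ [z [_ hxz]]] := hx.
have hzx : z * x = 1 by rewrite mulrC.
have Mlz : forall l, L l -> L (l * z * x) by move=> l hl; rewrite -mulrA hzx mulr1.
exists (fun u => L (u * x)), x; split; last split => //.
  split.
    split; first by rewrite mul0r.
    split; first by move=> u v hu hv; rewrite mulrDl; apply: LD.
    by move=> a u ha hu; rewrite -mulrA; apply: LM.
  split.
    move=> u hu.
    have : principal B x (u * x).
      by rewrite -eLB -(mulr1 (u * x)); apply: setmul_gen => //; exact: sr1.
    move=> [b [hb eb]].
    by rewrite -(mulr1 u) -hxz mulrA eb -mulrA hxz mulr1.
  exists (fun u => L' (u * z)); split.
    split; first by rewrite mul0r.
    split; first by move=> u v hu hv; rewrite mulrDl; apply: L'D.
    by move=> a u ha hu; rewrite -mulrA; apply: L'M.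
  split.
    move=> u hu.
    have hxs : setmul L B x.
      by rewrite eLB; exists 1; split; [exact: sr1 | rewrite mul1r].
    have -> : u = (u * z) * x by rewrite -mulrA hzx mulr1.
    move: x hxs {hx hxz hzx Mlz eLB}.
    apply: (@setmul_ind L B (fun v => B (u * z * v))).
    - by rewrite mulr0; exact: sr0.
    - by move=> ????; rewrite mulrDr; apply: srD.
    move=> l b hl hb; rewrite mulrCA mulrA; apply: srM => //.
    by apply: hAB; rewrite -e; apply: setmul_gen.
  apply: pred_ext => u; split.
    move: u; apply: (@setmul_ind _ _ A).
    - exact: sr0.
    - by move=> ??; apply: srD.
    move=> m m' hm hm'.
    have -> : m * m' = (m * x) * (m' * z) by rewrite mulrACA hxz mulr1.
    by rewrite -e; apply: setmul_gen.
  rewrite -e; move: u.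
  apply: setmul_ind.
  - exact: setmul0.
  - by move=> ??; apply: setmulD.
  move=> l l' hl hl'.
  have -> : l * l' = (l * z) * (l' * x) by rewrite mulrACA hzx mulr1.
  apply: setmul_gen; first exact: Mlz.
  by rewrite -mulrA hxz mulr1.
apply: pred_ext => u; split.
  move=> hu.
  have -> : u = (u * z) * (1 * x) by rewrite mul1r -mulrA hzx mulr1.
  apply: setmul_gen; first exact: Mlz.
  by exists 1; split => //; exact: sr1.
move: u; apply: (@setmul_ind _ _ L) => //.
move=> m w hm [a [ha ->]]; rewrite mulrCA; exact: LM.
Qed.

End Aux.
Theorem theorem5p1 (C : comPzRingType) (A B : C -> Prop) :
  subring A -> subring B -> incl A B ->
  (* first map: G(A,B) ⊆ G(A,C), principal ideals of B^* are principal of C^* *)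
  (forall L, invertible A B L -> invertible A (@fullset C) L) /\
  (forall x, sunit B x -> sunit (@fullset C) x) /\
  (* second map L |-> LB : G(A,C) -> G(B,C), homomorphism, principal to principal *)
  (forall L, invertible A (@fullset C) L -> invertible B (@fullset C) (setmul L B)) /\
  (forall L M, invertible A (@fullset C) L -> invertible A (@fullset C) M ->
     setmul (setmul L M) B = setmul (setmul L B) (setmul M B)) /\
  (forall x, sunit (@fullset C) x -> setmul (principal A x) B = principal B x) /\
  (* exactness at C(A,B): injectivity of the induced map *)
  (forall L, invertible A B L ->
     forall x, sunit (@fullset C) x -> L = principal A x ->
     exists y, sunit B y /\ L = principal A y) /\
  (* image ⊆ kernel *)
  (forall L, invertible A B L ->
     exists x, sunit (@fullset C) x /\ setmul L B = principal B x) /\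
  (* kernel ⊆ image *)
  (forall L, invertible A (@fullset C) L ->
     forall x, sunit (@fullset C) x -> setmul L B = principal B x ->
     exists M y, invertible A B M /\ sunit (@fullset C) y /\
                 L = setmul M (principal A y)).
Proof.
move=> hA hB hAB.
split.
  move=> L [hL [_ [L' [hL' [_ e]]]]]; split => //; split => //.
  by exists L'.
split.
  by move=> x [_ [y [_ h]]]; split => //; exists y.
split.
  by move=> L; apply: part3.
split.
  by move=> L M _ _; apply: part4.
split.
  by move=> x _; apply: part5.
split.
  by move=> L; apply: part6.
split.
  by move=> L; apply: part7.
by move=> L; apply: part8.
Qed.
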